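(* Let $U=U_1\times\cdots\times U_m\subset\mathbb{R}^m_+$ be a convex set with each $U_i\subseteq\mathbb{R}$, let $C\subseteq\mathbb{R}^m$ be a set and $\overline{U}=U\cap C$. Let $c\in\mathbb{R}^{n_1}$, $d\in\mathbb{R}^{n_2}$, $a_i\in\mathbb{R}^{n_1}$, $g_i\in\mathbb{R}^{n_2}$ ($i\in[m]$). For a set $S\subseteq\mathbb{R}^m$ define the adaptive robust value $$z(S)=\inf_{x\in\mathbb{R}^{n_1},\ y:S\to\mathbb{R}^{n_2}}\Big\{c^Tx+\sup_{u\in S}d^Ty(u):\ a_i^Tx+g_i^Ty(u)\ge u_i\ \ \forall u\in S,\ \forall i\in[m]\Big\},$$ and let $z_{\rm aro}=z(U)$, $z_{\rm acp}=z(\overline{U})$. Let $\rho_{\rm aro}=\rho(U^\downarrow,\overline{U}^\downarrow)$ and $\gamma_{\rm aro}=\gamma(U^\downarrow,\overline{U}^\downarrow)$. If $0<z_{\rm acp}\le z_{\rm aro}<\infty$, then $$\rho_{\rm aro}\le\frac{z_{\rm acp}}{z_{\rm aro}}\le\gamma_{\rm aro}.$$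
   Context: $[m]=\{1,\dots,m\}$. For $S\subseteq\mathbb{R}^m_+$, $S^\downarrow=\{t\in\mathbb{R}^m_+:\exists s\in S,\ t\le s\text{ componentwise}\}$. For $r\ge0$, $rS=\{rx:x\in S\}$. For sets $S_1,S_2$: $\rho(S_1,S_2)=\max\{\rho\ge 0:\rho S_1\subseteq S_2\}$ and $\gamma(S_1,S_2)=\min\{\gamma\ge0: S_2\subseteq \gamma S_1\}$. The second-stage decision $y$ ranges over arbitrary functions of the uncertainty. *)

(* Defs.v *)
From mathcomp Require Import all_boot all_order all_algebra.
From mathcomp Require Import all_classical all_reals.
From mathcomp Require Import ereal.
Set Implicit Arguments. Unset Strict Implicit. Unset Printing Implicit Defensive.
Import Order.TTheory GRing.Theory Num.Theory.
Local Open Scope classical_set_scope.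
Local Open Scope ring_scope.

Section Defs.
Variable R : realType.

Definition dotp (n : nat) (x y : 'I_n -> R) : R := \sum_(i < n) x i * y i.

Definition nonneg_orthant (m : nat) : set ('I_m -> R) :=
  [set u | forall i, 0 <= u i].

Definition vle (m : nat) (t s : 'I_m -> R) : Prop := forall i, t i <= s i.

Definition down_clos (m : nat) (S : set ('I_m -> R)) : set ('I_m -> R) :=
  [set t | nonneg_orthant t /\ exists2 s, S s & vle t s].

Definition scale_set (m : nat) (r : R) (S : set ('I_m -> R)) : set ('I_m -> R) :=
  [set (fun i => r * x i) | x in S].

(* rho(S1,S2) = max{rho >= 0 : rho S1 <= S2}, taken as a supremum in \bar R *)
Definition rho_fac (m : nat) (S1 S2 : set ('I_m -> R)) : \bar R :=
  ereal_sup [set r%:E | r in [set r : R | 0 <= r /\ scale_set r S1 `<=` S2]].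

(* gamma(S1,S2) = min{gamma >= 0 : S2 <= gamma S1}, taken as an infimum in \bar R *)
Definition gamma_fac (m : nat) (S1 S2 : set ('I_m -> R)) : \bar R :=
  ereal_inf [set g%:E | g in [set g : R | 0 <= g /\ S2 `<=` scale_set g S1]].

Definition is_product_set (m : nat) (U : set ('I_m -> R)) : Prop :=
  exists Ui : 'I_m -> set R, U = [set u | forall i, Ui i (u i)].

Definition convex_setR (m : nat) (U : set ('I_m -> R)) : Prop :=
  forall u v, U u -> U v -> forall t : R, 0 <= t -> t <= 1 ->
    U (fun i => t * u i + (1 - t) * v i).

(* adaptive robust value z(S); the second-stage policy y is an arbitrary
   function of the uncertainty (only its values on S matter). *)
Definition zval (m n1 n2 : nat) (c : 'I_n1 -> R) (d : 'I_n2 -> R)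
  (a : 'I_m -> 'I_n1 -> R) (g : 'I_m -> 'I_n2 -> R) (S : set ('I_m -> R)) : \bar R :=
  ereal_inf [set ((dotp c xy.1)%:E + ereal_sup [set (dotp d (xy.2 u))%:E | u in S])%E
            | xy in [set xy : ('I_n1 -> R) * (('I_m -> R) -> ('I_n2 -> R)) |
                      forall u, S u -> forall i,
                        u i <= dotp (a i) xy.1 + dotp (g i) (xy.2 u)]].
End Defs.

(* Main.v *)
Require Import Defs.
From mathcomp Require Import all_boot all_order all_algebra.
From mathcomp Require Import all_classical all_reals.
From mathcomp Require Import ereal.
Import Order.TTheory GRing.Theory Num.Theory.
Local Open Scope classical_set_scope.
Local Open Scope ring_scope.

Lemma dotZ (R : realType) n (v w : 'I_n -> R) (t : R) :
  dotp v (fun j => t * w j) = t * dotp v w.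
Proof. by rewrite /dotp mulr_sumr; apply: eq_bigr => j _; rewrite mulrCA. Qed.

Lemma key (R : realType) (m n1 n2 : nat) (c : 'I_n1 -> R) (d : 'I_n2 -> R)
  (a : 'I_m -> 'I_n1 -> R) (g : 'I_m -> 'I_n2 -> R)
  (S T : set ('I_m -> R)) (k L : R) (f : ('I_m->R) -> ('I_m->R)) :
  0 < k -> (forall u, S u -> T (f u) /\ forall i, k * u i <= f u i) ->
  (L%:E <= zval c d a g S)%E -> ((k * L)%:E <= zval c d a g T)%E.
Proof.
move=> k0 hf hL.
apply: le_ereal_inf_tmp => _ [[x y] /= feas <-].
pose x' := fun j => k^-1 * x j.
pose y' := fun u j => k^-1 * y (f u) j.
have feas' : forall u, S u -> forall i, u i <= dotp (a i) x' + dotp (g i) (y' u).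
  move=> u Su i; rewrite !dotZ -mulrDr.
  have h1 := (hf u Su).2 i; have h2 := feas (f u) (hf u Su).1 i.
  rewrite -[u i](mulKf (lt0r_neq0 k0)); apply: ler_wpM2l.
    by rewrite invr_ge0 ltW.
  exact: le_trans h2.
have hz : (zval c d a g S <= (dotp c x')%:E +
    ereal_sup [set (dotp d (y' u))%:E | u in S])%E.
  by apply: ereal_inf_lbound; exists (x', y').
have hL2 := le_trans hL hz.
have ubT : forall u, S u -> ((dotp d (y (f u)))%:E <=
    ereal_sup [set (dotp d (y u))%:E | u in T])%E.
  by move=> u Su; apply: ereal_sup_ubound; exists (f u) => //; exact: (hf u Su).1.
move: ubT; case: (ereal_sup _) => [s0| |] ubT.
- have hs : (ereal_sup [set (dotp d (y' u))%:E | u in S] <= (k^-1 * s0)%:E)%E.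
    apply: ge_ereal_sup => _ [u Su <-]; rewrite lee_fin /y' dotZ.
    apply: ler_wpM2l; first by rewrite invr_ge0 ltW.
    by have := ubT u Su; rewrite lee_fin.
  have := le_trans hL2 (leeD2l _ hs).
  rewrite /x' dotZ -EFinD lee_fin -mulrDr => h.
  rewrite -EFinD lee_fin.
  by rewrite -(mulVKf (lt0r_neq0 k0) (dotp c x + s0)); apply: ler_wpM2l => //; exact: ltW.
- by rewrite addey // leey.
- have hs : (ereal_sup [set (dotp d (y' u))%:E | u in S] <= -oo)%E.
    apply: ge_ereal_sup => _ [u Su <-].
    by have := ubT u Su.
  have := le_trans hL2 (leeD2l _ hs).
  by rewrite addeNy.
Qed.

Theorem theorem2 (R : realType) (m n1 n2 : nat)
  (U C : set ('I_m -> R)) (c : 'I_n1 -> R) (d : 'I_n2 -> R)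
  (a : 'I_m -> 'I_n1 -> R) (g : 'I_m -> 'I_n2 -> R) :
  U `<=` @nonneg_orthant R m ->
  is_product_set U ->
  convex_setR U ->
  let Ubar := U `&` C in
  let z_aro := zval c d a g U in
  let z_acp := zval c d a g Ubar in
  (0 < z_acp)%E -> (z_acp <= z_aro)%E -> (z_aro < +oo)%E ->
  (rho_fac (down_clos U) (down_clos Ubar) <= (fine z_acp / fine z_aro)%:E)%E /\
  ((fine z_acp / fine z_aro)%:E <= gamma_fac (down_clos U) (down_clos Ubar))%E.
Proof.
move=> Uge0 _ _ Ubar z_aro z_acp h0 hle hoo.
have aro0 : (0 < z_aro)%E := lt_le_trans h0 hle.
have acpoo : (z_acp < +oo)%E := le_lt_trans hle hoo.
have EB : z_aro = (fine z_aro)%:E.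
  by move: aro0 hoo; case: (z_aro).
have EA : z_acp = (fine z_acp)%:E.
  by move: h0 acpoo; case: (z_acp).
set A := fine z_acp; set B := fine z_aro.
have A0 : 0 < A by rewrite -lte_fin -EA.
have B0 : 0 < B by rewrite -lte_fin -EB.
split.
- apply: ge_ereal_sup => _ [r [r0 hr] <-]; rewrite lee_fin.
  have [->|rpos] := eqVneq r 0; first by rewrite divr_ge0 // ltW.
  have rp : 0 < r by rewrite lt_def rpos r0.
  have hc : forall u, exists s, U u -> Ubar s /\ forall i, r * u i <= s i.
    move=> u; case: (pselect (U u)) => Uu; last by exists u.
    have : down_clos Ubar (fun i => r * u i).
      apply: hr; exists u => //; split; first exact: Uge0.
      by exists u => // i.
    by move=> [_ [s Us hs]]; exists s.
  have [f hf] := choice hc.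
  have := @key R m n1 n2 c d a g U Ubar r B f rp (fun u Uu => hf u Uu).
  rewrite -/z_aro -/z_acp EB EA lee_fin => /(_ (lexx _)) h.
  by rewrite ler_pdivlMr.
- apply: le_ereal_inf_tmp => _ [r [r0 hr] <-]; rewrite lee_fin.
  have [r00|rpos] := eqVneq r 0.
    exfalso; move: h0; apply/negP; rewrite -leNgt.
    have hz : (z_acp <= (dotp c (fun _ => 0))%:E +
        ereal_sup [set (dotp d ((fun _ _ => 0) u))%:E | u in Ubar])%E.
      apply: ereal_inf_lbound; exists ((fun _ => 0), (fun _ _ => 0)) => //=.
      move=> u Uu i.
      have : down_clos Ubar u.
        split; first exact: Uge0 Uu.1.
        by exists u => // j.
      move/hr => [t _ ht].
      by rewrite -ht r00 /dotp !big1 ?mul0r ?addr0 // => j _; rewrite mulr0.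
    apply: (le_trans hz).
    have d0 : dotp (R:=R) d (fun _ => 0) = 0 by rewrite /dotp big1 // => j _; rewrite mulr0.
    have c0 : dotp (R:=R) c (fun _ => 0) = 0 by rewrite /dotp big1 // => j _; rewrite mulr0.
    rewrite c0 add0e; apply: ge_ereal_sup => _ [u _ <-].
    by rewrite d0.
  have rp : 0 < r by rewrite lt_def rpos r0.
  have hc : forall u, exists s, Ubar u -> U s /\ forall i, r^-1 * u i <= s i.
    move=> u; case: (pselect (Ubar u)) => Uu; last by exists u.
    have : down_clos Ubar u.
      split; first exact: Uge0 Uu.1.
      by exists u => // j.
    move/hr => [t [_ [s Us hs]] ht].
    exists s => _; split => // i.
    by rewrite -ht mulKf ?lt0r_neq0.
  have [f hf] := choice hc.
  have := @key R m n1 n2 c d a g Ubar U r^-1 A f (ltac:(by rewrite invr_gt0)) (fun u Uu => hf u Uu).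
  rewrite -/z_aro -/z_acp EB EA lee_fin => /(_ (lexx _)) h.
  have := ler_wpM2l (ltW rp) h; rewrite mulrA mulfV ?lt0r_neq0 // mul1r => h2.
  by rewrite ler_pdivrMr // mulrC.
Qed.
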